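(* Assume $q\ge3$. Then $BC(0)=1$, and for every positive integer $n$ divisible by $q-1$ and every $\lambda\in\mathbb{F}_q$, \[ (1-(\theta-\lambda)^n)\,BC(n)=\sum_{\substack{\beta\in\mathbb{N}^{q-1}\\ n-|q^\beta|\ge0}}\left[\begin{matrix} n\\ n-|q^\beta|,\ |q^\beta|\end{matrix}\right](\theta-\lambda)^{n-1-|q^\beta|}\,BC(n-|q^\beta|). \]
   Context: $A=\mathbb{F}_q[\theta]$, $K=\mathbb{F}_q(\theta)$. $D_i$ is the product of all monic polynomials of degree $i$ in $A$, and $e_C(z)=\sum_{j\ge0}z^{q^j}/D_j$. For $n=\sum_i n_iq^i$ written in base $q$ ($0\le n_i\le q-1$), the Carlitz factorial is $\Pi(n)=\prod_i D_i^{n_i}$, and for non-negative integers $n,k_1,\dots,k_j$, $\left[\begin{smallmatrix} n\\ k_1,\dots,k_j\end{smallmatrix}\right]=\Pi(n)/(\Pi(k_1)\cdots\Pi(k_j))\in K$. The Bernoulli–Carlitz numbers $BC(n)\in K$, for $n\ge0$ divisible by $q-1$, are defined by $z/e_C(z)=\sum_{n\ge0,\,(q-1)\mid n}\frac{BC(n)}{\Pi(n)}z^n$. For $\beta\in\mathbb{N}^{q-1}$, $|q^\beta|=\sum_i q^{\beta_i}$. *)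

(* Defs.v *)
From HB Require Import structures.
From mathcomp Require Import all_boot all_order all_algebra.
Set Implicit Arguments. Unset Strict Implicit. Unset Printing Implicit Defensive.
Import Order.TTheory GRing.Theory Num.Theory.
Local Open Scope ring_scope.

Section Carlitz.
Variable F : finFieldType.

(* A = F_q[theta] = {poly F},  K = F_q(theta) = {fraction {poly F}} *)
Definition Kfield := {fraction {poly F}}.
Definition toK (p : {poly F}) : Kfield := FracField.tofrac p.
Definition theta : Kfield := toK 'X.
Definition qq : nat := #|F|.

(* D_i : product of all monic polynomials of degree i in A; a monic
   polynomial of degree i is written uniquely as X^i + sum_{j<i} c_j X^j. *)
Definition Dpoly (i : nat) : {poly F} :=
  \prod_(c : {ffun 'I_i -> F}) ('X^i + \sum_(j < i) c j *: 'X^j).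
Definition D (i : nat) : Kfield := toK (Dpoly i).

Definition qdigit (n i : nat) : nat := ((n %/ qq ^ i) %% qq)%N.

(* Carlitz factorial Pi(n) = prod_i D_i^{n_i}; digits n_i vanish for i > n. *)
Definition CPi (n : nat) : Kfield := \prod_(i < n.+1) D i ^+ qdigit n i.

Definition cbinom (n k1 k2 : nat) : Kfield := CPi n / (CPi k1 * CPi k2).

(* coefficients of e_C(z)/z = sum_j z^(q^j - 1)/D_j *)
Definition eCz_coef (m : nat) : Kfield :=
  \sum_(j < m.+1 | (qq ^ j)%N == m.+1) (D j)^-1.

(* first n+1 coefficients of the formal power series inverse of
   a(z) = sum_m a m z^m (a 0 invertible):
   b_0 = a_0^-1, b_m = - a_0^-1 * sum_{k=1}^m a_k b_{m-k}. *)
Fixpoint psinv_upto (a : nat -> Kfield) (n : nat) : seq Kfield :=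
  match n with
  | 0 => [:: (a 0%N)^-1]
  | m.+1 => let s := psinv_upto a m in
            rcons s (- (a 0%N)^-1 *
                     \sum_(k < m.+1) a k.+1 * nth 0 s (m - k)%N)
  end.
Definition psinv (a : nat -> Kfield) (n : nat) : Kfield :=
  nth 0 (psinv_upto a n) n.

(* z / e_C(z) = sum_n BC(n)/Pi(n) z^n, i.e. BC(n) = Pi(n) * [z^n](e_C(z)/z)^-1 *)
Definition BC (n : nat) : Kfield := CPi n * psinv eCz_coef n.

Definition qabs (r N : nat) (beta : {ffun 'I_r -> 'I_N}) : nat :=
  (\sum_(i < r) qq ^ (beta i))%N.

End Carlitz.

(* Main.v *)
Require Import Defs.
From HB Require Import structures.
From mathcomp Require Import all_boot all_order all_algebra all_field ring.
Import Order.TTheory GRing.Theory Num.Theory.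
Local Open Scope ring_scope.
Set Implicit Arguments. Unset Strict Implicit.

Lemma frobD_gen (F : finFieldType) (R : comNzRingType) (x y : R) :
  (forall p, p \in [pchar F] -> p \in [pchar R]) ->
  (x + y) ^+ #|F| = x ^+ #|F| + y ^+ #|F|.
Proof.
move=> H; have [p pr pF] := finPcharP F.
have pR := H p pF.
rewrite (card_pprimeChar pF); apply: exprDn_pchar.
rewrite (eq_pnat _ (pcharf_eq pR)).
by rewrite pnatX pnat_id.
Qed.

Section S.
Variable F : finFieldType.
Local Notation K := (Kfield F).
Definition iotK : F -> K := (@FracField.tofrac {poly F}) \o polyC.

Lemma genK (w : K) : \prod_(c : F) (w - iotK c) = w ^+ #|F| - w.
Proof.
have := congr1 (fun p => (map_poly iotK p).[w]) (finField_genPoly F).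
rewrite /= rmorph_prod horner_prod rmorphB /= map_polyXn map_polyX !hornerE => ->.
by apply: eq_bigr => c _; rewrite rmorphB /= map_polyX map_polyC !hornerE.
Qed.

Lemma iotKN c : iotK (- c) = - iotK c.
Proof. by rewrite /iotK /= !rmorphN. Qed.

Lemma q_gt1 : (1 < #|F|)%N. Proof. exact: finNzRing_gt1. Qed.

Lemma prod_lin (y z : K) :
  \prod_(c : F) (y + iotK c * z) = y ^+ #|F| - z ^+ #|F|.-1 * y.
Proof.
have q1 := q_gt1.
have [->|nz] := eqVneq z 0.
  rewrite expr0n; have -> : (#|F|.-1 == 0%N) = false by case: #|F| q1 => [|[|]].
  rewrite mul0r subr0.
  under eq_bigr do rewrite mulr0 addr0.
  by rewrite prodr_const cardE.
have -> : \prod_(c : F) (y + iotK c * z) = z ^+ #|F| * \prod_(c : F) (y / z - iotK c).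
  have hz : \prod_(c : F) z = z ^+ #|F| by rewrite prodr_const.
  rewrite (reindex_inj oppr_inj) /= -hz -big_split /=.
  by apply: eq_bigr => c _; rewrite iotKN mulNr mulrBr mulrCA divff // mulr1 [iotK c * z]mulrC.
rewrite genK mulrBr -exprMn mulrCA divff // mulr1.
rewrite -(prednK (ltnW q1)) exprS; congr (_ - _).
by rewrite /= exprSr -mulrA [z * (_ / _)]mulrC divfK.
Qed.

Local Notation th := (theta F).
Local Notation q := #|F|.

Definition av j (c : {ffun 'I_j -> F}) : K := \sum_(k < j) iotK (c k) * th ^+ k.
Definition E j (x : K) : K := \prod_(c : {ffun 'I_j -> F}) (x + av c).

Lemma D_E j : D F j = E j (th ^+ j).
Proof.
rewrite /D /toK /E /Dpoly rmorph_prod; apply: eq_bigr => c _.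
rewrite rmorphD rmorphXn rmorph_sum /av; congr (_ + _).
by apply: eq_bigr => k _; rewrite -mul_polyC rmorphM rmorphXn.
Qed.

Lemma E0 x : E 0 x = x.
Proof.
rewrite /E; under eq_bigr do rewrite /av big_ord0 addr0.
by rewrite prodr_const card_ffun card_ord expn0 expr1.
Qed.

Definition mkf j (c0 : F) (g : {ffun 'I_j -> F}) : {ffun 'I_j.+1 -> F} :=
  [ffun i => if unlift ord_max i is Some k then g k else c0].
Definition unmkf j (f : {ffun 'I_j.+1 -> F}) : F * {ffun 'I_j -> F} :=
  (f ord_max, [ffun k => f (lift ord_max k)]).

Lemma av_mkf j c0 g : av (@mkf j c0 g) = av g + iotK c0 * th ^+ j.
Proof.
rewrite /av big_ord_recr /= ffunE unlift_none; congr (_ + _).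
apply: eq_bigr => k _; rewrite ffunE.
have -> : widen_ord (leqnSn j) k = lift ord_max k.
  by apply: val_inj; rewrite /= /bump leqNgt ltn_ord.
by rewrite liftK.
Qed.

Lemma Esplit j x : E j.+1 x = \prod_(c0 : F) E j (x + iotK c0 * th ^+ j).
Proof.
rewrite /E pair_big /=.
rewrite (reindex (fun p : F * {ffun 'I_j -> F} => mkf p.1 p.2)) /=.
  by apply: eq_bigr => [[c0 g]] _ /=; rewrite av_mkf addrA addrAC.
exists (@unmkf j) => [[c0 g] _ | f _].
  rewrite /unmkf /mkf ffunE unlift_none; congr (_, _).
  by apply/ffunP => k; rewrite !ffunE liftK.
apply/ffunP => i; rewrite /unmkf /mkf ffunE /=.
by case: unliftP => [k ->|->]; rewrite ?ffunE.
Qed.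

Lemma pcharFK p : p \in [pchar F] -> p \in [pchar K].
Proof.
move=> pF; apply: (rmorph_pchar (@FracField.tofrac _)).
by rewrite pchar_poly.
Qed.

Lemma frobK (x y : K) : (x + y) ^+ q = x ^+ q + y ^+ q.
Proof. exact: frobD_gen pcharFK. Qed.

Lemma iotKq c : iotK c ^+ q = iotK c.
Proof. by rewrite -rmorphXn expf_card. Qed.

Definition linE j := (forall x y, E j (x + y) = E j x + E j y) /\
                     (forall c x, E j (iotK c * x) = iotK c * E j x).

Lemma Erec j x : linE j -> E j.+1 x = E j x ^+ q - E j (th ^+ j) ^+ q.-1 * E j x.
Proof.
move=> [Ha Hh]; rewrite Esplit.
under eq_bigr do rewrite Ha Hh.
exact: prod_lin.
Qed.

Lemma Elin j : linE j.
Proof.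
elim: j => [|j IH].
  by split=> *; rewrite !E0.
split=> [x y|c x]; rewrite !Erec //; case: IH => Ha Hh.
  rewrite Ha frobK mulrDr opprD addrACA //.
rewrite Hh exprMn iotKq mulrBr; congr (_ - _).
by rewrite mulrCA.
Qed.

Fixpoint hh (x : nat -> K) (n : nat) : nat -> K :=
  match n with
  | 0 => fun m => if m is 0 then 1 else 0
  | n'.+1 => let prev := hh x n' in
     fix g m := match m with 0 => 1 | m'.+1 => prev m + x n' * g m' end
  end.

Lemma hS1 x n : hh x n.+1 0 = 1. Proof. by []. Qed.
Lemma hS x n m : hh x n.+1 m.+1 = hh x n m.+1 + x n * hh x n.+1 m.
Proof. by []. Qed.

Lemma h1 x m : hh x 1 m = x 0%N ^+ m.
Proof. by elim: m => [|m IH] //; rewrite hS IH /= add0r exprS. Qed.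

Lemma hP x n m :
  hh x n.+1 m.+1 = hh (fun i => x i.+1) n m.+1 + x 0%N * hh x n.+1 m.
Proof.
elim: n m => [|n IHn] m.
  by rewrite hS /= add0r.
elim: m => [|m IHm].
  by rewrite hS IHn [hh (fun i => x i.+1) n.+1 1]hS !hS1 !mulr1 addrAC.
rewrite hS IHn [hh (fun i => x i.+1) n.+1 m.+2]hS.
have e2 : hh x n.+1 m.+1 = hh x n.+2 m.+1 - x n.+1 * hh x n.+2 m.
  by rewrite hS addrK.
rewrite e2 IHm; ring.

Qed.

Lemma hI2 x n m :
  hh (fun i => x i.+1) n m.+1 - hh x n m.+1 = (x n - x 0%N) * hh x n.+1 m.
Proof.
have := hP x n m; rewrite hS => e.
have -> : hh (fun i => x i.+1) n m.+1 = hh x n m.+1 + x n * hh x n.+1 m - x 0%N * hh x n.+1 m.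
  by rewrite e addrK.
ring.
Qed.

Lemma hfrob x y n m : (forall i, y i = x i ^+ q) -> hh y n m = hh x n m ^+ q.
Proof.
move=> Hy; elim: n m => [|n IHn] m.
  by case: m => [|m] /=; rewrite ?expr1n ?expr0n //; case: q q_gt1.
elim: m => [|m IHm]; first by rewrite !hS1 expr1n.
by rewrite !hS frobK exprMn IHn IHm Hy.
Qed.

Definition xs (i : nat) : K := th ^+ (q ^ i).

Lemma xsS i : xs i.+1 = xs i ^+ q.
Proof. by rewrite /xs -exprM expnSr. Qed.

Lemma Dj_pow (d h : K) : d ^+ q.-1 * (d * h) = d ^+ q * h.
Proof. by rewrite mulrA -exprSr prednK // ltnW // q_gt1. Qed.

Lemma Estep j m : (forall m, E j (th ^+ (j + m)) = E j (th ^+ j) * hh xs j.+1 m) ->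
  E j.+1 (th ^+ (j.+1 + m)) =
    E j (th ^+ j) ^+ q * ((xs j.+1 - xs 0%N) * hh xs j.+2 m).
Proof.
move=> P; rewrite Erec; last exact: Elin.
rewrite addSnnS !P Dj_pow exprMn -mulrBr -hI2; congr (_ * (_ - _)).
by rewrite (hfrob (x := xs) (y := fun i => xs i.+1)) // => i; rewrite xsS.
Qed.

Lemma Eval j m : E j (th ^+ (j + m)) = E j (th ^+ j) * hh xs j.+1 m.
Proof.
elim: j m => [|j IH] m.
  by rewrite !E0 h1 /xs expr1 mul1r add0n.
rewrite (Estep m IH).
have := Estep 0 IH; rewrite addn0 hS1 mulr1 => ->.
by rewrite mulrA.
Qed.

Lemma Drec j : D F j.+1 = (th ^+ (q ^ j.+1) - th) * D F j ^+ q.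
Proof.
rewrite !D_E; have := Estep 0 (@Eval j); rewrite addn0 => ->.
by rewrite hS1 mulr1 mulrC /xs expn0 expr1.
Qed.
End S.

Section S.
Variable F : finFieldType.
Local Notation K := (Kfield F).
Local Notation th := (theta F).
Local Notation q := #|F|.


Lemma D0 : D F 0 = 1.
Proof. by rewrite D_E E0. Qed.

Lemma bracket_neq0 j : th ^+ (q ^ j.+1) - th != 0.
Proof.
have h : (1 < q ^ j.+1)%N by rewrite -(exp1n j.+1) ltn_exp2r // q_gt1.
rewrite /theta /toK -rmorphXn -rmorphB tofrac_eq0.
apply/eqP => /(congr1 (fun p : {poly F} => p`_(q ^ j.+1)%N)).
rewrite coefB coefXn coefX eqxx.
have -> : (q ^ j.+1 == 1)%N = false by case: (q ^ j.+1)%N h => [|[|]].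
by rewrite subr0 coef0 => /eqP; rewrite oner_eq0.
Qed.

Lemma D_neq0 j : D F j != 0.
Proof.
elim: j => [|j IH]; first by rewrite D0 oner_eq0.
by rewrite Drec mulf_neq0 ?bracket_neq0 ?expf_neq0.
Qed.

Lemma tpow (lam : F) i : (th - iotK lam) ^+ (q ^ i) = th ^+ (q ^ i) - iotK lam.
Proof.
elim: i => [|i IH]; first by rewrite !expn0 !expr1.
rewrite expnSr exprM IH -iotKN frobK -exprM -expnSr.
by rewrite iotKq.
Qed.

Lemma tbracket (lam : F) j : (th - iotK lam) ^+ (q ^ j.+1) - (th - iotK lam) = th ^+ (q ^ j.+1) - th.
Proof. by rewrite tpow opprB addrA subrK. Qed.
End S.

Section S.
Variable F : finFieldType.
Local Notation K := (Kfield F).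
Local Notation th := (theta F).
Local Notation q := #|F|.

Definition ec N : {poly K} := \sum_(j < N) (D F j)^-1 *: 'X^(q ^ j)%N.

Lemma frobP (p r : {poly K}) : (p + r) ^+ q = p ^+ q + r ^+ q.
Proof. apply: (@frobD_gen F {poly K}) => p0 h. rewrite pchar_poly. exact: pcharFK. Qed.

Lemma frob_sum N (f : 'I_N -> {poly K}) : (\sum_(j < N) f j) ^+ q = \sum_(j < N) (f j) ^+ q.
Proof.
elim: N f => [|N IH] f.
  have q0 : (q == 0)%N = false by rewrite eqn0Ngt ltnW // q_gt1.
  by rewrite !big_ord0 expr0n q0.
by rewrite !big_ord_recr /= frobP IH.
Qed.

Lemma scal_id (t : K) (lam : F) j : t = th - iotK lam ->
  (D F j.+1)^-1 * t ^+ (q ^ j.+1) = t * (D F j.+1)^-1 + (D F j)^-1 ^+ q.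
Proof.
move=> ->; set T := _ ^+ _.
have hd := D_neq0 F j.+1; have hd0 := D_neq0 F j.
apply: (mulfI hd); rewrite mulrA (mulfV hd) mul1r mulrDr mulrCA (mulfV hd) mulr1.
rewrite Drec -(tbracket lam) -/T exprVn (mulfK (expf_neq0 _ hd0)).
by rewrite addrC subrK.
Qed.

Lemma comp_sum (R : comNzRingType) N (f : 'I_N -> {poly R}) r :
  (\sum_(j < N) f j) \Po r = \sum_(j < N) (f j \Po r).
Proof.
elim: N f => [|N IH] f; first by rewrite !big_ord0 comp_poly0.
by rewrite !big_ord_recr comp_polyD IH.
Qed.

Lemma comp_Xn (R : comNzRingType) n (r : {poly R}) : 'X^n \Po r = r ^+ n.
Proof. by rewrite rmorphXn /= comp_polyX. Qed.

Lemma ec_fun N (t : K) (lam : F) : t = th - iotK lam ->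
  ec N.+1 \Po (t *: 'X) = t *: ec N.+1 + (ec N) ^+ q.
Proof.
move=> ht; rewrite /ec comp_sum frob_sum.
rewrite !big_ord_recl scalerDr -addrA. congr (_ + _).
  rewrite comp_polyZ comp_Xn expn0 !expr1 scalerA mulrC -scalerA. reflexivity.
rewrite scaler_sumr -big_split /=; apply: eq_bigr => j _.
rewrite comp_polyZ comp_Xn exprZn exprZn -exprM -expnSr.
rewrite scalerA scalerA -scalerDl; congr (_ *: _).
exact: scal_id ht.
Qed.
End S.

Section G.
Variable R : comNzRingType.

Lemma coef_scl (t : R) (p : {poly R}) i : (p \Po (t *: 'X))`_i = t ^+ i * p`_i.
Proof.
rewrite coef_comp_poly.
under eq_bigr do rewrite exprZn coefZ coefXn.
case: (ltnP i (size p)) => h.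
  rewrite (bigD1 (Ordinal h)) // big1 => [|k hk].
    rewrite [nat_of_ord (Ordinal h)]/=.
    change (p`_i * (t ^+ i * (i == i)%:R) + 0 = t ^+ i * p`_i).
    by rewrite eqxx mulr1 addr0 mulrC.
  have -> : (i == k) = false.
    by apply/negbTE; move: hk; rewrite -val_eqE eq_sym.
  by rewrite mulr0 mulr0.
rewrite big1 ?(nth_default _ h) ?mulr0 // => k _.
have : (k < i)%N by apply: leq_trans h.
by rewrite ltn_neqAle eq_sym => /andP [/negbTE -> _]; rewrite mulr0 mulr0.
Qed.

Definition eqm M (p r : {poly R}) := forall i, (i < M)%N -> p`_i = r`_i.

Lemma eqm_refl M p : eqm M p p. Proof. by []. Qed.
Lemma eqm_sym M p r : eqm M p r -> eqm M r p. Proof. by move=> h i /h. Qed.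
Lemma eqm_trans M p r s : eqm M p r -> eqm M r s -> eqm M p s.
Proof. by move=> h1 h2 i hi; rewrite h1 // h2. Qed.
Lemma eqm_add M p r p' r' : eqm M p r -> eqm M p' r' -> eqm M (p + p') (r + r').
Proof. by move=> h1 h2 i hi; rewrite !coefD h1 // h2. Qed.
Lemma eqm_mull M s p r : eqm M p r -> eqm M (s * p) (s * r).
Proof.
move=> h i hi; rewrite !coefM; apply: eq_bigr => j _; rewrite h //.
by apply: leq_ltn_trans hi; apply: leq_subr.
Qed.
Lemma eqm_mulr M s p r : eqm M p r -> eqm M (p * s) (r * s).
Proof. by move=> h; rewrite ![_ * s]mulrC; apply: eqm_mull. Qed.
Lemma eqm_scl M t p r : eqm M p r -> eqm M (p \Po (t *: 'X)) (r \Po (t *: 'X)).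
Proof. by move=> h i hi; rewrite !coef_scl h. Qed.
Lemma eqm_eq M p r : p = r -> eqm M p r. Proof. by move=> ->. Qed.
End G.

Section S.
Variable F : finFieldType.
Local Notation K := (Kfield F).
Local Notation th := (theta F).
Local Notation q := #|F|.

Lemma size_psinv_upto (a : nat -> K) m : size (psinv_upto a m) = m.+1.
Proof. by elim: m => [|m IH] //=; rewrite size_rcons IH. Qed.

Lemma nth_psinv_upto (a : nat -> K) m k : (k <= m)%N ->
  nth 0 (psinv_upto a m) k = psinv a k.
Proof.
elim: m => [|m IH]; first by rewrite leqn0 => /eqP ->.
rewrite leq_eqVlt => /orP [/eqP -> //|hk].
by rewrite /= nth_rcons size_psinv_upto hk IH.
Qed.

Lemma psinv0 (a : nat -> K) : psinv a 0 = (a 0%N)^-1.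
Proof. by []. Qed.

Lemma psinvS (a : nat -> K) m : psinv a m.+1 =
  - (a 0%N)^-1 * \sum_(k < m.+1) a k.+1 * psinv a (m - k)%N.
Proof.
rewrite {1}/psinv /= nth_rcons size_psinv_upto ltnn eqxx; congr (_ * _).
by apply: eq_bigr => k _; rewrite nth_psinv_upto // leq_subr.
Qed.

Lemma a0 : eCz_coef F 0 = 1.
Proof.
rewrite /eCz_coef big_mkcond big_ord1.
by rewrite [nat_of_ord ord0]/= expn0 eqxx D0 invr1.
Qed.

Local Notation g := (psinv (eCz_coef F)).

Lemma conv_g m : \sum_(k < m.+1) eCz_coef F k * g (m - k)%N = (m == 0%N)%:R.
Proof.
case: m => [|m].
  by rewrite big_ord1 [nat_of_ord ord0]/= a0 psinv0 a0 invr1 mulr1.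
rewrite big_ord_recl [nat_of_ord ord0]/= a0 mul1r subn0 psinvS a0 invr1 mulN1r.
rewrite [X in - X + _ = _](_ : _ = \sum_(i < m.+1) eCz_coef F (bump 0 i) * g (m.+1 - bump 0 i)%N).
  by rewrite addNr.
by apply: eq_bigr => k _; rewrite /bump /= add1n subSS.
Qed.

Lemma coef_ec N i : (ec F N)`_i = \sum_(j < N | (q ^ j)%N == i) (D F j)^-1.
Proof.
rewrite /ec coef_sum [RHS]big_mkcond; apply: eq_bigr => j _.
rewrite coefZ coefXn eq_sym; case: eqP => _; by rewrite ?mulr1 ?mulr0.
Qed.

Lemma sum_widen (f : nat -> K) A B j : (A <= B)%N -> (j <= A)%N ->
  \sum_(k < A | (q ^ k)%N == j) f k = \sum_(k < B | (q ^ k)%N == j) f k.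
Proof.
move=> hAB hj; rewrite (big_ord_widen_cond B (fun k => (q ^ k)%N == j) f hAB); apply: eq_bigl => k.
case: eqP => //= hk; rewrite (leq_trans _ hj) // -hk ltn_expl //.
exact: q_gt1.
Qed.

Lemma coef_ecn n j : (j <= n)%N -> (ec F n.+1)`_j.+1 = eCz_coef F j.
Proof.
move=> hj; rewrite coef_ec /eCz_coef /qq; symmetry.
by apply: (sum_widen (fun k => (D F k)^-1)).
Qed.

Lemma coef_ec0 N : (ec F N)`_0 = 0.
Proof.
rewrite coef_ec big1 // => k; by rewrite expn_eq0 eqn0Ngt (ltnW (q_gt1 F)).
Qed.

Definition GG n : {poly K} := \poly_(i < n.+1) g i.

Lemma Gec n : eqm n.+2 (GG n * ec F n.+1) 'X.
Proof.
move=> i hi; rewrite coefMr coefX.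
case: i hi => [|m] hm.
  by rewrite big_ord1 coef_ec0 mulr0.
rewrite big_ord_recl coef_ec0 mulr0 add0r.
rewrite [X in X = _](_ : _ = \sum_(k < m.+1) eCz_coef F k * g (m - k)%N).
  by rewrite conv_g.
apply: eq_bigr => k _.
have e : bump 0 k = k.+1 by [].
rewrite [nat_of_ord (lift ord0 k)]/= e subSS coef_poly.
have hm' : (m < n.+1)%N by [].
have hk : (k <= n)%N by rewrite -ltnS (leq_trans _ hm') // ltnS.
rewrite (leq_ltn_trans (leq_subr k m) hm') (coef_ecn hk).
exact: mulrC.
Qed.
End S.

Lemma digits (Q : nat) (c : nat -> nat) N i : (forall j, c j < Q)%N ->
  ((\sum_(j < N) c j * Q ^ j) %/ Q ^ i %% Q = if (i < N)%N then c i else 0)%N.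
Proof.
elim: N c i => [|N IH] c i hc.
  by rewrite big_ord0 div0n mod0n.
have Q0 : (0 < Q)%N by apply: leq_ltn_trans (hc 0%N).
rewrite big_ord_recl expn0 muln1.
have -> : (\sum_(j < N) c (bump 0 j) * Q ^ bump 0 j = (\sum_(j < N) c j.+1 * Q ^ j) * Q)%N.
  rewrite big_distrl /=; apply: eq_bigr => j _.
  by rewrite /bump /= add1n expnS mulnCA mulnC.
case: i => [|i].
  by rewrite expn0 divn1 addnC modnMDl modn_small.
rewrite expnS divnMA addnC divnMDl // (@divn_small (c ord0) Q (hc 0%N)) addn0.
by have := IH (fun j => c j.+1) i (fun j => hc j.+1); rewrite ltnS => <-.
Qed.

Lemma prod_extend (R : comNzRingType) (f : nat -> R) (e : nat -> nat) A B :
  (A <= B)%N -> (forall i, (A <= i)%N -> (i < B)%N -> e i = 0%N) ->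
  \prod_(i < B) f i ^+ e i = \prod_(i < A) f i ^+ e i.
Proof.
move=> hAB he; rewrite (big_ord_widen B (fun i => f i ^+ e i) hAB) [RHS]big_mkcond.
apply: eq_bigr => i _; case: ifP => // h.
by rewrite he ?expr0 // leqNgt h.
Qed.

Section S.
Variable F : finFieldType.
Local Notation K := (Kfield F).
Local Notation th := (theta F).
Local Notation q := #|F|.

Lemma ecpow n : ec F n.+1 ^+ q.-1 =
  \sum_(beta : {ffun 'I_q.-1 -> 'I_n.+1})
     (\prod_(i < q.-1) (D F (beta i))^-1) *: 'X^(qabs F beta).
Proof.
have -> : ec F n.+1 ^+ q.-1 = \prod_(i < q.-1) ec F n.+1 by rewrite prodr_const card_ord.
rewrite /ec bigA_distr_bigA; apply: eq_bigr => beta _.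
by rewrite scaler_prod prodrXr /qabs /qq.
Qed.

Lemma coefPG n (Gt : {poly K}) : (ec F n.+1 ^+ q.-1 * Gt)`_n =
  \sum_(beta : {ffun 'I_q.-1 -> 'I_n.+1} | (qabs F beta <= n)%N)
     (\prod_(i < q.-1) (D F (beta i))^-1) * Gt`_(n - qabs F beta).
Proof.
rewrite ecpow mulr_suml coef_sum [RHS]big_mkcond; apply: eq_bigr => beta _.
rewrite -scalerAl coefZ coefXnM ltnNge.
by case: (qabs F beta <= n)%N; rewrite /= ?mulr0.
Qed.

Lemma frob_mod n : eqm n.+2 (ec F n.+1 ^+ q) (ec F n ^+ q).
Proof.
move=> i hi; rewrite {1}/ec big_ord_recr /= -/(ec F n) frobP coefD.
rewrite exprZn -exprM -expnSr coefZ coefXn.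
have -> : (i == q ^ n.+1)%N = false.
  apply/negbTE; rewrite neq_ltn (leq_trans hi) //.
  by rewrite ltn_expl // q_gt1.
by rewrite mulr0 addr0.
Qed.
End S.

Lemma prod_neq0 (R : idomainType) n (f : nat -> R) (e : nat -> nat) :
  (forall i, f i != 0) -> \prod_(i < n) f i ^+ e i != 0.
Proof.
move=> h; apply: (big_ind (fun x : R => x != 0)).
- exact: oner_neq0.
- by move=> x y hx hy; rewrite mulf_neq0.
- by move=> i _; rewrite expf_neq0.
Qed.

Section S.
Variable F : finFieldType.
Local Notation K := (Kfield F).
Local Notation q := #|F|.

Lemma CPi_neq0 m : CPi F m != 0.
Proof.
exact: (prod_neq0 _ (fun i => qdigit F m i) (@D_neq0 F)).
Qed.

Lemma CPi_qabs n (beta : {ffun 'I_q.-1 -> 'I_n.+1}) :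
  CPi F (qabs F beta) = \prod_(i < q.-1) D F (beta i).
Proof.
pose cnt (j : nat) := #|[pred i : 'I_q.-1 | nat_of_ord (beta i) == j]|.
have hc : forall j, (cnt j < q)%N.
  move=> j; apply: (leq_ltn_trans (max_card _)).
  by rewrite card_ord prednK // ltnW // q_gt1.
have hk : qabs F beta = (\sum_(j < n.+1) cnt j * q ^ j)%N.
  rewrite /qabs /qq (partition_big beta xpredT) //=; apply: eq_bigr => j _.
  rewrite (eq_bigr (fun _ => (q ^ j)%N)); last by move=> i /eqP ->.
  by rewrite sum_nat_const; congr (_ * _)%N; apply: eq_card => i.
have hprod : \prod_(i < q.-1) D F (beta i) = \prod_(j < n.+1) D F j ^+ cnt j.
  rewrite (partition_big beta xpredT) //=; apply: eq_bigr => j _.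
  rewrite (eq_bigr (fun _ => D F j)); last by move=> i /eqP ->.
  by rewrite prodr_const; congr (_ ^+ _); apply: eq_card => i.
pose e (i : nat) := if (i < n.+1)%N then cnt i else 0%N.
have hd : forall i, qdigit F (qabs F beta) i = e i.
  by move=> i; rewrite /qdigit hk /qq digits.
rewrite hprod /CPi.
rewrite (eq_bigr (fun i : 'I_(qabs F beta).+1 => D F i ^+ e i)); last by move=> i _; rewrite hd.
rewrite -(@prod_extend _ (D F) e (qabs F beta).+1 ((qabs F beta).+1 + n.+1)) ?leq_addr //; last first.
  move=> i hi _; rewrite -hd /qdigit divn_small ?mod0n //.
  by apply: (leq_trans (ltn_expl (qabs F beta) (q_gt1 F))); rewrite leq_exp2l ?q_gt1 // ltnW.
rewrite (eq_bigr (fun j : 'I_n.+1 => D F j ^+ e j)); last by move=> j _; rewrite /e ltn_ord.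
rewrite -(@prod_extend _ (D F) e n.+1 ((qabs F beta).+1 + n.+1)) ?leq_addl //.
by move=> i hi _; rewrite /e ltnNge hi.
Qed.
End S.

Section S.
Variable F : finFieldType.
Local Notation K := (Kfield F).
Local Notation th := (theta F).
Local Notation q := #|F|.
Local Notation g := (psinv (eCz_coef F)).

Lemma step1 n (t : K) (lam : F) : t = th - iotK lam ->
  eqm n.+2 (ec F n.+1 \Po (t *: 'X)) (ec F n.+1 * (t%:P + ec F n.+1 ^+ q.-1)).
Proof.
move=> ht; apply: (eqm_trans (eqm_eq (ec_fun n ht))).
have -> : ec F n.+1 * (t%:P + ec F n.+1 ^+ q.-1) = t *: ec F n.+1 + ec F n.+1 ^+ q.
  rewrite mulrDr mulrC mul_polyC -exprS prednK //; exact: ltnW (q_gt1 F).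
apply: eqm_add; first exact: eqm_refl.
exact: eqm_sym (@frob_mod F n).
Qed.

Lemma step2 n (t : K) (lam : F) : t = th - iotK lam ->
  eqm n.+2 ((t *: 'X) * GG F n)
     ('X * ((t%:P + ec F n.+1 ^+ q.-1) * (GG F n \Po (t *: 'X)))).
Proof.
move=> ht; set G := GG F n; set ecn := ec F n.+1; set Pq := ecn ^+ q.-1.
set Gt := G \Po (t *: 'X).
have e1 : (t *: 'X) * G = ('X \Po (t *: 'X)) * G by rewrite comp_polyX.
apply: (eqm_trans (eqm_eq e1)).
apply: (eqm_trans (eqm_mulr G (eqm_scl t (eqm_sym (@Gec F n))))).
rewrite comp_polyM -/Gt.
have h1' := step1 (n:=n) ht.
have h3 := eqm_mulr G (eqm_mull Gt h1').
apply: (eqm_trans h3).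
have e2 : Gt * (ecn * (t%:P + Pq)) * G = (G * ecn) * ((t%:P + Pq) * Gt).
  by clear e1; clearbody Gt Pq; clearbody G ecn; ring.
apply: (eqm_trans (eqm_eq e2)).
exact: eqm_mulr _ (@Gec F n).
Qed.

Lemma key n (t : K) (lam : F) : t = th - iotK lam ->
  t * g n = t * (t ^+ n * g n) +
  \sum_(beta : {ffun 'I_q.-1 -> 'I_n.+1} | (qabs F beta <= n)%N)
     (\prod_(i < q.-1) (D F (beta i))^-1) * (t ^+ (n - qabs F beta) * g (n - qabs F beta)%N).
Proof.
move=> ht; have := step2 (n:=n) ht (ltnSn n.+1).
rewrite -scalerAl coefZ coefXM coefXM /= mulrDl mul_polyC coefD coefZ coefPG.
rewrite coef_scl /GG !coef_poly ltnSn => ->; congr (_ + _).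
apply: eq_bigr => beta hb; rewrite coef_scl coef_poly.
by rewrite (leq_ltn_trans (leq_subr _ _) (ltnSn n)).
Qed.
End S.

Unset Implicit Arguments.

Lemma alg1 (R : fieldType) (A B C T U G : R) : B != 0 ->
  A / (B * C) * (U * T^-1) * (B * G) = A * T^-1 * (C^-1 * (U * G)).
Proof.
move=> hB; rewrite invfM; have := mulVf hB; move: (B^-1) => Bi e.
have -> : A * (Bi * C^-1) * (U * T^-1) * (B * G) = (Bi * B) * (A * T^-1 * (C^-1 * (U * G))) by ring.
by rewrite e mul1r.
Qed.
Lemma alg2 (R : fieldType) (T Tn Cn g : R) : T != 0 ->
  (1 - Tn) * (Cn * g) = Cn * T^-1 * (T * g - T * (Tn * g)).
Proof. move=> hT. have := mulVf hT. move: (T^-1) => Ti e.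
have -> : Cn * Ti * (T * g - T * (Tn * g)) = Cn * (Ti * T) * (g - Tn * g) by ring.
rewrite e; ring. Qed.

Lemma zexp (R : fieldType) (t : R) (n k : nat) : t != 0 -> (k <= n)%N ->
  t ^ (n%:Z - 1 - k%:Z) = t ^+ (n - k) * t^-1.
Proof.
move=> ht hk.
have -> : (n%:Z - 1 - k%:Z = (n - k)%N%:Z + (-1))%R by rewrite addrAC subzn.
by rewrite expfzDr // exprN1 -exprnP.
Qed.

Theorem proposition3p7 (F : finFieldType) (hq : (2 < #|F|)%N) :
  BC F 0 = 1 /\
  forall (n : nat), (0 < n)%N -> (#|F|.-1 %| n)%N -> forall lam : F,
    let t : Kfield F := theta F - toK lam%:P in
    (1 - t ^+ n) * BC F n =
    \sum_(beta : {ffun 'I_(#|F|.-1) -> 'I_n.+1} | (qabs F beta <= n)%N)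
       cbinom F n (n - qabs F beta) (qabs F beta)
       * t ^ (n%:Z - 1 - (qabs F beta)%:Z)
       * BC F (n - qabs F beta).
Proof.
split.
  rewrite /BC /CPi big_ord1 /qdigit [nat_of_ord ord0]/= div0n mod0n expr0 mul1r.
  by rewrite psinv0 a0 invr1.
move=> n _ _ lam t.
have ht : t = theta F - iotK lam by reflexivity.
have tnz : t != 0.
  by rewrite /t /theta /toK -rmorphB tofrac_eq0 polyXsubC_eq0.
have Kk := key n ht.
set S := \sum_(beta : {ffun 'I_(#|F|.-1) -> 'I_n.+1} | (qabs F beta <= n)%N) _ in Kk.
rewrite (eq_bigr (fun beta : {ffun 'I_(#|F|.-1) -> 'I_n.+1} =>
   CPi F n * t^-1 * ((\prod_(i < #|F|.-1) (D F (beta i))^-1) *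
     (t ^+ (n - qabs F beta) * psinv (eCz_coef F) (n - qabs F beta))))); last first.
  move=> beta hb; rewrite /cbinom /BC CPi_qabs (zexp _ _ _ _ tnz hb) prodfV.
  apply: alg1; exact: CPi_neq0.
rewrite -mulr_sumr -/S.
have hS : S = t * psinv (eCz_coef F) n - t * (t ^+ n * psinv (eCz_coef F) n).
  by rewrite [in RHS]Kk addrAC subrr add0r.
rewrite hS /BC; exact: alg2.
Qed.
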